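(* Let $G$ be a bipartite graph and let $M$ be a maximum matching in $G$ such that $\mathrm{diss}(G)=\frac{4}{3}\alpha(G-M)$. Then $\alpha(G-M)=\alpha(G)$, the graphs $G$ and $G-M$ have the same matching number, and for every maximum dissociation set $I$ of $G$, the induced subgraph $G[I]$ is $1$-regular and exactly half of the edges of $G[I]$ belong to $M$ (so $|E(G[I])\cap M|=\frac{\mathrm{diss}(G)}{4}$).
   Context: All graphs are finite, simple and undirected. A set $I$ of vertices of a graph $G$ is a dissociation set if the induced subgraph $G[I]$ has maximum degree at most $1$; $\mathrm{diss}(G)$ is the maximum order of a dissociation set in $G$. $\alpha(H)$ denotes the independence number of $H$. For a set $M$ of edges, $G-M$ is the graph on $V(G)$ with edge set $E(G)\setminus M$. *)

(* Defs.v *)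
(* A finite simple graph on a finType T is a symmetric,
   irreflexive boolean relation e : rel T. Edges are 2-element sets. *)
From mathcomp Require Import all_boot all_order.
Set Implicit Arguments. Unset Strict Implicit. Unset Printing Implicit Defensive.

Section Graphs.
Variable T : finType.

Definition simple_graph (e : rel T) : Prop := symmetric e /\ irreflexive e.

Definition bipartite (e : rel T) : Prop :=
  exists c : T -> bool, forall x y, e x y -> c x != c y.

Definition is_edge (e : rel T) (f : {set T}) : bool :=
  [exists x, exists y, e x y && (f == [set x; y])].

Definition matching (e : rel T) (M : {set {set T}}) : bool :=
  [forall f in M, is_edge e f] &&
  [forall f in M, forall g in M, (f != g) ==> [disjoint f & g]].

Definition matching_number (e : rel T) : nat :=
  \max_(M : {set {set T}} | matching e M) #|M|.

Definition maximum_matching (e : rel T) (M : {set {set T}}) : bool :=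
  matching e M && (#|M| == matching_number e).

Definition remove_edges (e : rel T) (M : {set {set T}}) : rel T :=
  fun x y => e x y && ([set x; y] \notin M).

Definition independent (e : rel T) (A : {set T}) : bool :=
  [forall x in A, forall y in A, ~~ e x y].

Definition alpha (e : rel T) : nat :=
  \max_(A : {set T} | independent e A) #|A|.

Definition ideg (e : rel T) (I : {set T}) (x : T) : nat :=
  #|[set y in I | e x y]|.

Definition dissociation (e : rel T) (I : {set T}) : bool :=
  [forall x in I, ideg e I x <= 1].

Definition diss (e : rel T) : nat :=
  \max_(I : {set T} | dissociation e I) #|I|.

Definition maximum_dissociation (e : rel T) (I : {set T}) : bool :=
  dissociation e I && (#|I| == diss e).

Definition induced_edges (e : rel T) (I : {set T}) : {set {set T}} :=
  [set f : {set T} | is_edge e f & f \subset I].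

End Graphs.

(* Main.v *)
Require Import Defs.
From mathcomp Require Import all_boot all_order.
From mathcomp Require Import zify.
Set Implicit Arguments. Unset Strict Implicit. Unset Printing Implicit Defensive.

Section Hall.
Variable T : finType.
Definition nb (r : rel T) (S : {set T}) : {set T} := [set y | [exists x in S, r x y]].

Lemma nbP (r : rel T) (S : {set T}) y : reflect (exists2 x, x \in S & r x y) (y \in nb r S).
Proof.
rewrite inE; apply: (iffP existsP) => [[x /andP[]]|[x xS rxy]]; first by exists x.
by exists x; rewrite xS.
Qed.

Lemma nb0 (r : rel T) : nb r set0 = set0.
Proof. apply/setP=> y; rewrite [RHS]inE; apply/negbTE/nbP => -[x]; by rewrite inE. Qed.

Lemma card_le_T (A : {set T}) : #|A| <= #|T|.
Proof. exact: max_card. Qed.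

Definition hallP (r : rel T) (X S X' : {set T}) (g : T -> T) :=
 [/\ S \subset X, X' \subset X, {in X' &, injective g},
     {in X', forall x, r x (g x)} & #|X| + #|nb r S| <= #|X'| + #|S| ].

Lemma hall0 (r : rel T) : hallP r set0 set0 set0 id.
Proof.
split; rewrite ?sub0set ?nb0 ?cards0 //; by move=> x; rewrite inE.
Qed.

Lemma defect_hall n : forall (r : rel T) (X : {set T}), #|X| <= n -> exists S X' g, hallP r X S X' g.
Proof.
elim: n => [|n IH] r X hX.
  have -> : X = set0 by apply/eqP; rewrite -cards_eq0; lia.
  by exists set0, set0, id; exact: hall0.
have [->|/set0Pn [x0 x0X]] := eqVneq X set0.
  by exists set0, set0, id; exact: hall0.
pose w (S : {set T}) := #|S| + (#|T| - #|nb r S|).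
have w0 : w set0 = #|T| by rewrite /w nb0 !cards0 add0n subn0.
have [Sm Smx wmax] : exists2 Sm : {set T}, Sm \subset X & forall S : {set T}, S \subset X -> w S <= w Sm.
  case: (@arg_maxnP _ set0 (fun S : {set T} => S \subset X) w (sub0set X)) => Sm H1 H2; by exists Sm.
have [/existsP [S0 /and3P [S0n S0p wS0]] | noA] :=
  boolP [exists S0 : {set T}, [&& S0 != set0, S0 \proper X & w Sm <= w S0]].
-
  have S0X : S0 \subset X by move: S0p; rewrite properEneq => /andP[].
  have cS0 : #|S0| <= n by have := proper_card S0p; lia.
  have [A [S0' [g1 [AS0 S0'S0 g1i g1r h1]]]] := IH r S0 cS0.
  pose r2 := fun a b => r a b && (b \notin nb r S0).
  have cX2 : #|X :\: S0| <= n.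
    rewrite cardsD (setIidPr S0X).
    have : 0 < #|S0| by rewrite card_gt0.
    lia.
  have [B [X2' [g2 [BX2 X2'X2 g2i g2r h2]]]] := IH r2 (X :\: S0) cX2.
  exists (S0 :|: B), (S0' :|: X2'), (fun z => if z \in S0 then g1 z else g2 z).
  have X2'n : forall z, z \in X2' -> z \notin S0.
    by move=> z /(subsetP X2'X2); rewrite inE => /andP[].
  have wA : w A <= w S0 by apply: leq_trans (wS0); apply: wmax; exact: subset_trans AS0 S0X.
  split.
  + by rewrite subUset S0X (subset_trans BX2) ?subsetDl.
  + by rewrite subUset (subset_trans S0'S0 S0X) (subset_trans X2'X2) ?subsetDl.
  + move=> z1 z2; rewrite !inE => /orP[z1S|z1S] /orP[z2S|z2S];
      rewrite ?(subsetP S0'S0 _ z1S) ?(subsetP S0'S0 _ z2S) ?(negbTE (X2'n _ z1S)) ?(negbTE (X2'n _ z2S)).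
    * exact: g1i.
    * move=> E; have := g2r _ z2S; rewrite /r2 -E => /andP[_ /nbP]; case.
      by exists z1; [exact: (subsetP S0'S0) | exact: g1r].
    * move=> E; have := g2r _ z1S; rewrite /r2 E => /andP[_ /nbP]; case.
      by exists z2; [exact: (subsetP S0'S0) | exact: g1r].
    * exact: g2i.
  + move=> z; rewrite inE => /orP[zS|zS].
      by rewrite (subsetP S0'S0 _ zS); exact: g1r.
    by rewrite (negbTE (X2'n _ zS)); have /andP[] := g2r _ zS.
  + have hS : #|nb r (S0 :|: B)| <= #|nb r S0| + #|nb r2 B|.
      apply: leq_trans (_ : #|nb r S0 :|: nb r2 B| <= _); last first.
        by rewrite cardsU; lia.
      apply: subset_leq_card; apply/subsetP => y /nbP [x]; rewrite inE => /orP[xS|xB] rxy.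
        by rewrite inE; apply/orP; left; apply/nbP; exists x.
      rewrite inE; case yS: (y \in nb r S0) => //=.
      by apply/nbP; exists x; rewrite // /r2 rxy yS.
    have d1 : #|S0' :|: X2'| = #|S0'| + #|X2'|.
      rewrite -cardsUI; suff -> : S0' :&: X2' = set0 by rewrite cards0 addn0.
      apply/setP => z; rewrite !inE; apply/andP => -[zS zX]; move: (X2'n _ zX).
      by rewrite (subsetP S0'S0 _ zS).
    have d2 : #|S0 :|: B| = #|S0| + #|B|.
      rewrite -cardsUI; suff -> : S0 :&: B = set0 by rewrite cards0 addn0.
      apply/setP => z; rewrite !inE; apply/andP => -[zS zX]; move: (subsetP BX2 _ zX).
      by rewrite inE zS.
    have cX2e : #|X :\: S0| = #|X| - #|S0| by rewrite cardsD (setIidPr S0X).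
    have cS0X : #|S0| <= #|X| by exact: subset_leq_card.
    move: h1 h2 wA hS; rewrite d1 d2 cX2e /w.
    have := card_le_T (nb r A); have := card_le_T (nb r S0).
    lia.
- have nA : forall S, S != set0 -> S \proper X -> w S < w Sm.
    move=> S Sn Sp; rewrite ltnNge; apply/negP => H; move/negP: noA; apply.
    by apply/existsP; exists S; rewrite Sn Sp H.
  have [wgt|wle] := ltnP #|T| (w Sm).
  +
    have SmX : Sm = X.
      have [//|SmnX] := eqVneq Sm X.
      have Smn : Sm != set0 by apply/eqP => E; move: wgt; rewrite E w0 ltnn.
      by have := nA Sm Smn; rewrite properEneq SmnX Smx ltnn => /(_ isT).
    have cX1 : #|X :\ x0| <= n by move: hX; rewrite (cardsD1 x0 X) x0X; lia.
    have [A [X1' [g1 [AX1 X1'X1 g1i g1r h1]]]] := IH r (X :\ x0) cX1.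
    have X1X : X :\ x0 \subset X by exact: subsetDl.
    have wA : w A < w X.
      rewrite -SmX; have [->|An] := eqVneq A set0; first by rewrite w0.
      apply: nA => //; rewrite properEneq (subset_trans AX1 X1X) andbT.
      apply/eqP => E; move: (subsetP AX1 x0); rewrite E x0X !inE eqxx.
      by move=> /(_ isT).
    exists X, X1', g1; split => //.
      exact: subset_trans X1'X1 X1X.
    move: h1 wA; rewrite (cardsD1 x0 X) x0X /w.
    have := card_le_T (nb r A); have := card_le_T (nb r X).
    have -> : #|X :\ x0| = #|X| - 1 by rewrite (cardsD1 x0 X) x0X; lia.
    lia.
  +
    have hall1 : forall S : {set T}, S \subset X -> #|S| <= #|nb r S|.
      move=> S SX; have := leq_trans (wmax S SX) wle; rewrite /w.
      have := card_le_T (nb r S); lia.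
    have hall2 : forall S : {set T}, S != set0 -> S \proper X -> #|S| < #|nb r S|.
      move=> S Sn Sp; have := leq_trans (nA S Sn Sp) wle; rewrite /w.
      have := card_le_T (nb r S); lia.
    have : 0 < #|nb r [set x0]|.
      apply: leq_trans (hall1 _ _); first by rewrite cards1.
      by rewrite sub1set.
    rewrite card_gt0 => /set0Pn [y0 /nbP [x]]; rewrite inE => /eqP -> rxy0.
    pose r1 := fun a b => r a b && (b != y0).
    have cX1 : #|X :\ x0| <= n by move: hX; rewrite (cardsD1 x0 X) x0X; lia.
    have [A [X1' [g1 [AX1 X1'X1 g1i g1r h1]]]] := IH r1 (X :\ x0) cX1.
    have X1X : X :\ x0 \subset X by exact: subsetDl.
    have hA : #|A| <= #|nb r1 A|.
      have sub : nb r A \subset y0 |: nb r1 A.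
        apply/subsetP => y /nbP [z zA rzy]; rewrite !inE.
        case: eqP => //= /eqP yn; apply/existsP; exists z; by rewrite zA /r1 rzy yn.
      have := subset_leq_card sub; rewrite cardsU1.
      have [->|An] := eqVneq A set0; first by rewrite cards0.
      have : #|A| < #|nb r A|.
        apply: hall2 => //; rewrite properEneq (subset_trans AX1 X1X) andbT.
        apply/eqP => E; move: (subsetP AX1 x0); rewrite E x0X !inE eqxx.
        by move=> /(_ isT).
      case: (y0 \notin nb r1 A) => /=; lia.
    have x0n : x0 \notin X1'.
      by apply/negP => /(subsetP X1'X1); rewrite !inE eqxx.
    exists set0, (x0 |: X1'), (fun z => if z == x0 then y0 else g1 z).
    split.
    * exact: sub0set.
    * by rewrite subUset sub1set x0X (subset_trans X1'X1 X1X).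
    * move=> z1 z2; rewrite !inE => /orP[/eqP->|z1S] /orP[/eqP->|z2S]; rewrite ?eqxx //.
      -- have := negP x0n; case: eqP => [<-|_] //.
         move=> _ E; have := g1r _ z2S; rewrite /r1 -E eqxx andbF //.
      -- case: eqP => [E|_]; first by move: x0n; rewrite -E z1S.
         move=> E; have := g1r _ z1S; rewrite /r1 E eqxx andbF //.
      -- case: eqP => [E|_]; first by move: x0n; rewrite -E z1S.
         case: eqP => [E|_]; first by move: x0n; rewrite -E z2S.
         exact: g1i.
    * move=> z; rewrite !inE => /orP[/eqP->|zS]; first by rewrite eqxx.
      case: eqP => [E|_]; first by move: x0n; rewrite -E zS.
      by have /andP[] := g1r _ zS.
    * rewrite nb0 cards0 cardsU1 x0n addn0.
      move: h1; have -> : #|X :\ x0| = #|X| - 1 by rewrite (cardsD1 x0 X) x0X; lia.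
      have : 0 < #|X| by rewrite card_gt0; apply/set0Pn; exists x0.
      lia.
Qed.
End Hall.

Section Konig.
Variable T : finType.

Lemma konig (e : rel T) : symmetric e -> bipartite e -> #|T| <= alpha e + matching_number e.
Proof.
move=> se [c hc].
pose X := [set x | c x].
have [S [X' [g [SX X'X gi gr h]]]] := @defect_hall T #|X| e X (leqnn _).
have cS : forall x, x \in S -> c x by move=> x /(subsetP SX); rewrite inE.
pose Ind := S :|: (~: X :\: nb e S).
have indI : independent e Ind.
  apply/forallP => x; apply/implyP => xI; apply/forallP => y; apply/implyP => yI.
  apply/negP => exy; have cxy := hc _ _ exy.
  move: xI yI; rewrite !in_setU !in_setD !in_setC.
  case/orP => [xS|/andP[xnb cx]]; case/orP => [yS|/andP[ynb cy]].
  - by move: cxy; rewrite (cS _ xS) (cS _ yS).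
  - by move: ynb; rewrite (_ : y \in nb e S) //; apply/nbP; exists x.
  - by move: xnb; rewrite (_ : x \in nb e S) //; apply/nbP; exists y; rewrite // se.
  - by move: cxy cx cy; rewrite !inE; case: (c x); case: (c y).
have dI : S :&: (~: X :\: nb e S) = set0.
  apply/setP => z; rewrite in_set0; apply/negP; rewrite in_setI in_setD in_setC.
  by move=> /andP[zS /andP[_ zX]]; move: zX; rewrite (subsetP SX _ zS).
have cInd : #|Ind| = #|S| + #|~: X :\: nb e S|.
  by rewrite -cardsUI dI cards0 addn0.
have cD : #|~: X| <= #|~: X :\: nb e S| + #|nb e S|.
  rewrite cardsD; have := subset_leq_card (subsetIr (~: X) (nb e S)).
  have := subset_leq_card (subsetIl (~: X) (nb e S)). lia.
have cX := cardsC X.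
have gX : forall x, x \in X' -> c x && ~~ c (g x).
  move=> x xX; have cx : c x by move: (subsetP X'X _ xX); rewrite inE.
  by have := hc _ _ (gr _ xX); rewrite cx; case: (c (g x)).
pose N := [set [set x; g x] | x in X'].
have Nm : matching e N.
  apply/andP; split.
    apply/forallP => f; apply/implyP => /imsetP [x xX' ->].
    by apply/existsP; exists x; apply/existsP; exists (g x); rewrite gr // eqxx.
  apply/forallP => f; apply/implyP => /imsetP [x xX' ->].
  apply/forallP => f'; apply/implyP => /imsetP [x' xX'' ->]; apply/implyP => neq.
  have xx' : x != x' by apply: contra neq => /eqP ->.
  rewrite -setI_eq0; apply/eqP/setP => z; rewrite !inE.
  have /andP[c1 c2] := gX _ xX'; have /andP[c3 c4] := gX _ xX''.
  apply/negP => /andP[/orP[]/eqP-> /orP[]/eqP E].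
  - by rewrite E eqxx in xx'.
  - by move: c4; rewrite -E c1.
  - by move: c2; rewrite E c3.
  - by move: xx'; rewrite (gi _ _ xX' xX'' E) eqxx.
have cN : #|N| = #|X'|.
  apply: card_in_imset => x x' xX xX' E.
  have : x \in [set x'; g x'] by rewrite -E !inE eqxx.
  rewrite !inE => /orP[/eqP //|/eqP E2].
  have /andP[c1 _] := gX _ xX; have /andP[_ c4] := gX _ xX'.
  by move: c4; rewrite -E2 c1.
have la : #|Ind| <= alpha e by exact: (leq_bigmax_cond (P := independent e)).
have ln : #|N| <= matching_number e by exact: (leq_bigmax_cond (P := matching e)).
have cSX : #|S| <= #|X| := subset_leq_card SX.
lia.
Qed.
End Konig.

Section Diss.
Variable T : finType.
Variable e : rel T.
Hypothesis se : symmetric e.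
Variable c : T -> bool.
Hypothesis hc : forall x y, e x y -> c x != c y.
Variable I : {set T}.
Hypothesis dI : dissociation e I.

Definition nbrs x := [set y in I | e x y].
Definition phi x := x |: nbrs x.

Lemma helper z w : z \in I -> w \in I -> e z w -> ideg e I z = 1 /\ phi z = [set z; w].
Proof.
move=> zI wI ezw.
have wn : w \in nbrs z by rewrite inE wI ezw.
have le1 : ideg e I z <= 1 by move/forallP: dI => /(_ z) /implyP /(_ zI).
have ge1 : 0 < ideg e I z by rewrite /ideg card_gt0; apply/set0Pn; exists w; exact: wn.
have i1 : ideg e I z = 1 by lia.
split => //.
move/eqP: i1; rewrite /ideg => /cards1P [u Eu].
have Ew : nbrs z = [set w] by rewrite /nbrs Eu; move: wn; rewrite /nbrs Eu inE => /eqP ->.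
by rewrite /phi Ew.
Qed.

Definition EI := induced_edges e I.

Lemma edgeE f : f \in EI -> exists x y, [/\ x \in I, y \in I, e x y & f = [set x; y]].
Proof.
rewrite inE => /andP[/existsP [x /existsP [y /andP[exy /eqP Ef]]] fI].
exists x, y; split => //; apply: (subsetP fI); by rewrite Ef !inE eqxx ?orbT.
Qed.

Definition V (b : bool) (F : {set {set T}}) :=
  [set x in I | (c x == b) && (ideg e I x == 1) && (phi x \in F)].

Lemma cardV b (F : {set {set T}}) : F \subset EI -> #|V b F| = #|F|.
Proof.
move=> FE.
have inj : {in V b F &, injective phi}.
  move=> x x'; rewrite !inE => /andP[xI /andP[/andP[/eqP cx _] _]] /andP[x'I /andP[/andP[/eqP cx' _] _]] E.
  have : x' \in phi x by rewrite E /phi !inE eqxx.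
  rewrite /phi /nbrs !inE => /orP[/eqP //|/andP[_ exx']].
  by have := hc exx'; rewrite cx cx' eqxx.
rewrite -(card_in_imset inj); suff -> : phi @: V b F = F by [].
apply/setP => f; apply/imsetP/idP.
  by case=> x; rewrite inE => /andP[_ /andP[_ ?]] ->.
move=> fF; have [x [y [xI yI exy Ef]]] := edgeE (subsetP FE _ fF).
have [cxb|cxb] := eqVneq (c x) b.
  have [i1 Ph] := helper xI yI exy.
  exists x; first by rewrite inE xI cxb eqxx i1 Ph -Ef fF.
  by rewrite Ph Ef.
have cyb : c y == b.
  by move: (hc exy) cxb; case: (c x); case: (c y); case: (b).
have eyx : e y x by rewrite se.
have [i1 Ph] := helper yI xI eyx.
exists y; first by rewrite inE yI cyb i1 Ph setUC -Ef fF.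
by rewrite Ph Ef setUC.
Qed.

Lemma L1 : 2 * #|EI| <= #|I| /\ (2 * #|EI| = #|I| -> forall x, x \in I -> ideg e I x = 1).
Proof.
have Vt := cardV true (subxx EI); have Vf := cardV false (subxx EI).
have dsj : V true EI :&: V false EI = set0.
  apply/setP => z; rewrite !inE; case: (c z); rewrite ?andbF //.
have sub : V true EI :|: V false EI \subset I.
  by rewrite subUset; apply/andP; split; apply/subsetP => z; rewrite inE => /andP[].
have cU : #|V true EI :|: V false EI| = 2 * #|EI|.
  by have := cardsUI (V true EI) (V false EI); rewrite dsj cards0 Vt Vf; lia.
have le := subset_leq_card sub.
split; first by lia.
move=> E x xI.
have : V true EI :|: V false EI == I by rewrite eqEcard sub cU E leqnn.
move/eqP => EU; have : x \in V true EI :|: V false EI by rewrite EU.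
rewrite !inE.
by case/orP => /andP[_ /andP[/andP[_ /eqP ->] _]].
Qed.

Variable M : {set {set T}}.
Hypothesis Mm : matching e M.

Lemma L2 : #|I| + #|EI :&: M| <= alpha (remove_edges e M) + #|EI|.
Proof.
pose R := V true (EI :\: M).
have cR : #|R| = #|EI :\: M| by apply: cardV; exact: subsetDl.
have RI : R \subset I by apply/subsetP => z; rewrite inE => /andP[].
pose J := I :\: R.
have cJ : #|J| = #|I| - #|R| by rewrite cardsD (setIidPr RI).
have indJ : independent (remove_edges e M) J.
  apply/forallP => x; apply/implyP; rewrite inE => /andP[xR xI].
  apply/forallP => y; apply/implyP; rewrite inE => /andP[yR yI].
  apply/negP; rewrite /remove_edges => /andP[exy nM].
  have fE : [set x; y] \in EI.
    rewrite inE; apply/andP; split.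
      by apply/existsP; exists x; apply/existsP; exists y; rewrite exy eqxx.
    by rewrite subUset !sub1set xI yI.
  have [cx|cx] := boolP (c x).
    have [i1 Ph] := helper xI yI exy.
    by move: xR; rewrite inE xI cx i1 Ph in_setD fE nM.
  have cy : c y by move: (hc exy) cx; case: (c x); case: (c y).
  have eyx : e y x by rewrite se.
have [i1 Ph] := helper yI xI eyx.
  by move: yR; rewrite inE yI cy i1 Ph setUC in_setD fE nM.
have la : #|J| <= alpha (remove_edges e M) by exact: (leq_bigmax_cond (P := independent _)).
have cD : #|EI :\: M| = #|EI| - #|EI :&: M| by rewrite cardsD.
have le1 : #|EI :&: M| <= #|EI| by apply: subset_leq_card; exact: subsetIl.
have le2 : #|R| <= #|I| by exact: subset_leq_card.
lia.
Qed.

Lemma L3 : #|M| + #|I| <= #|EI :&: M| + #|T|.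
Proof.
have cC := cardsC I.
have cD : #|M :\: EI| = #|M| - #|M :&: EI| by rewrite cardsD.
have le1 : #|M :&: EI| <= #|M| by apply: subset_leq_card; exact: subsetIl.
rewrite setIC.
suff : #|M :\: EI| <= #|~: I| by lia.
have [E0|/set0Pn [f0 f0M]] := eqVneq (M :\: EI) set0; first by rewrite E0 cards0.
move/andP: Mm => [/forallP Me /forallP Md].
have [x0 _] : exists x0 : T, True.
  move: f0M; rewrite inE => /andP[_ /(implyP (Me f0)) /existsP [x _]]; by exists x.
pose h f := odflt x0 [pick z in f :\: I].
have hP : forall f, f \in M :\: EI -> h f \in f :\: I.
  move=> f; rewrite inE => /andP[fE fM].
  rewrite /h; case: pickP => [z //|none].
  exfalso; move: fE; rewrite inE (implyP (Me f) fM) /=; move/negP; apply.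
  apply/subsetP => z zf; move: (none z); rewrite !inE zf andbT; by move/negbFE.
have inj : {in M :\: EI &, injective h}.
  move=> f g fM gM E.
  have := hP _ fM; have := hP _ gM; rewrite !inE -E => /andP[_ hg] /andP[_ hf].
  apply/eqP; apply/negPn/negP => fg.
  move: fM gM; rewrite !inE => /andP[_ fM] /andP[_ gM].
  have := implyP (forallP (implyP (Md f) fM) g) gM; rewrite -setI_eq0 fg /= => /eqP.
  move/setP => /(_ (h f)); by rewrite !inE hf hg.
rewrite -(card_in_imset inj); apply: subset_leq_card; apply/subsetP => z /imsetP [f fM ->].
by move: (hP _ fM); rewrite !inE => /andP[].
Qed.
End Diss.
Unset Implicit Arguments. Set Strict Implicit. Set Printing Implicit Defensive.

Theorem mainTheorem3 (T : finType) (e : rel T) (M : {set {set T}}) :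
  simple_graph e -> bipartite e ->
  maximum_matching e M ->
  3 * diss e = 4 * alpha (remove_edges e M) ->
  [/\ alpha (remove_edges e M) = alpha e,
      matching_number e = matching_number (remove_edges e M) &
      forall I : {set T}, maximum_dissociation e I ->
        [/\ forall x, x \in I -> ideg e I x = 1,
            2 * #|induced_edges e I :&: M| = #|induced_edges e I| &
            4 * #|induced_edges e I :&: M| = diss e]].
Proof.
move=> [se irr] bip /andP[Mm /eqP nuE] heq.
have [c hc] := bip.
set H := remove_edges e M in heq *.
have seH : symmetric H by move=> x y; rewrite /H /remove_edges se setUC.
have bipH : bipartite H by exists c => x y /andP[exy _]; exact: hc.
have kE := konig se bip.
have kH := konig seH bipH.
have nuHle : matching_number H <= matching_number e.
  apply/bigmax_leqP => N /andP[/forallP N1 N2]; apply: leq_bigmax_cond.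
  apply/andP; split => //; apply/forallP => f; apply/implyP => fN.
  move: (implyP (N1 f) fN) => /existsP [x /existsP [y /andP[/andP[exy _] Ef]]].
  by apply/existsP; exists x; apply/existsP; exists y; rewrite exy.
have alle : alpha e <= alpha H.
  apply/bigmax_leqP => A /forallP A1; apply: leq_bigmax_cond.
  apply/forallP => x; apply/implyP => xA; apply/forallP => y; apply/implyP => yA.
  rewrite /H /remove_edges negb_and.
  by move: (implyP (A1 x) xA) => /forallP /(_ y) /implyP /(_ yA) ->.
have key : forall I, maximum_dissociation e I ->
   [/\ 2 * #|induced_edges e I| <= #|I|,
       (2 * #|induced_edges e I| = #|I| -> forall x, x \in I -> ideg e I x = 1),
       #|I| + #|induced_edges e I :&: M| <= alpha H + #|induced_edges e I|,
       #|M| + #|I| <= #|induced_edges e I :&: M| + #|T| &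
       #|I| = diss e].
  move=> I /andP[dI /eqP dE].
  have [l1 l1'] := L1 se hc dI.
  split => //.
    by have := L2 se hc dI Mm; rewrite /EI /H.
  by have := L3 dI Mm; rewrite /EI.
have [I0 I0m] : exists I0, maximum_dissociation e I0.
  have d0 : dissociation e set0 by apply/forallP => x; rewrite inE.
  case: (@arg_maxnP _ set0 (dissociation e) (fun I => #|I|) d0) => I dI Imax.
  exists I; rewrite /maximum_dissociation dI /=; apply/eqP/anti_leq.
  apply/andP; split; first exact: (leq_bigmax_cond (P := dissociation e)).
  by apply/bigmax_leqP => J /Imax.
have [a1 a2 a3 a4 a5] := key I0 I0m.
split.
- lia.
- lia.
- move=> I Im; have [b1 b2 b3 b4 b5] := key I Im.
  have E2 : 2 * #|induced_edges e I| = #|I| by lia.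
  split; [exact: b2 | lia | lia].
Qed.
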